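(* Let $F:\mathsf V\to\mathsf W$ and $G:\mathsf W\to\mathsf V$ be morphisms of quantales, and assume that either $G\dashv F$ (as monotone maps), or $F\dashv G$ and $F$ is injective. Then for every Cauchy complete $\mathsf V$-category $X=(X,a)$, the $\mathsf W$-category $FX=(X,F\circ a)$ is Cauchy complete.
   Context: A quantale $(\mathsf V,\otimes,k)$ is a complete anti-symmetric lattice with an associative, commutative operation $\otimes$ with neutral element $k$ distributing over arbitrary suprema. A morphism of quantales $F:(\mathsf V,\otimes,k)\to(\mathsf W,\oplus,l)$ is a monotone map preserving all suprema with $F(u)\oplus F(v)=F(u\otimes v)$ and $F(k)=l$. $G\dashv F$ means $G(w)\le v\iff w\le F(v)$. A $\mathsf V$-category $(X,a)$ is a set with $a:X\times X\to\mathsf V$ such that $k\le a(x,x)$ and $a(x,y)\otimes a(y,z)\le a(x,z)$. A $\mathsf V$-module $\varphi:(X,a)\rightharpoonup(Y,b)$ is a map $X\times Y\to\mathsf V$ with $a(x,x')\otimes\varphi(x',y)\le\varphi(x,y)$ and $\varphi(x,y)\otimes b(y,y')\le\varphi(x,y')$; composition $(\psi\cdot\varphi)(x,z)=\bigvee_y\varphi(x,y)\otimes\psi(y,z)$; $\varphi\dashv\psi$ means $a\le\psi\cdot\varphi$ and $\varphi\cdot\psi\le b$. $E=(\{\star\},k)$. $X$ is Cauchy complete if every left adjoint module $\varphi:E\rightharpoonup X$ is of the form $y\mapsto a(x,y)$ for some $x\in X$. *)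

(* Defs.v *)
Set Implicit Arguments.

Record quantale := Quantale {
  qcar :> Type;
  qle : qcar -> qcar -> Prop;
  qle_refl : forall u, qle u u;
  qle_trans : forall u v w, qle u v -> qle v w -> qle u w;
  qle_antisym : forall u v, qle u v -> qle v u -> u = v;
  qsup : (qcar -> Prop) -> qcar;
  qsup_ub : forall (S : qcar -> Prop) u, S u -> qle u (qsup S);
  qsup_least : forall (S : qcar -> Prop) v,
      (forall u, S u -> qle u v) -> qle (qsup S) v;
  tens : qcar -> qcar -> qcar;
  qunit : qcar;
  tens_assoc : forall u v w, tens u (tens v w) = tens (tens u v) w;
  tens_comm : forall u v, tens u v = tens v u;
  tens_unit : forall u, tens qunit u = u;
  tens_sup : forall u (S : qcar -> Prop),
      tens u (qsup S) = qsup (fun w => exists v, S v /\ w = tens u v)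
}.

Arguments qle {q}.
Arguments qsup {q}.
Arguments tens {q}.
Arguments qunit {q}.

Definition quantale_morphism {V W : quantale} (F : V -> W) : Prop :=
  (forall u v, qle u v -> qle (F u) (F v)) /\
  (forall S : V -> Prop, F (qsup S) = qsup (fun w => exists v, S v /\ w = F v)) /\
  (forall u v, tens (F u) (F v) = F (tens u v)) /\
  F qunit = qunit.

Definition madjoint {V W : quantale} (G : W -> V) (F : V -> W) : Prop :=
  forall w v, qle (G w) v <-> qle w (F v).

Definition is_Vcat {V : quantale} (X : Type) (a : X -> X -> V) : Prop :=
  (forall x, qle qunit (a x x)) /\
  (forall x y z, qle (tens (a x y) (a y z)) (a x z)).

Definition is_module {V : quantale} (X Y : Type) (a : X -> X -> V)
    (b : Y -> Y -> V) (phi : X -> Y -> V) : Prop :=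
  (forall x x' y, qle (tens (a x x') (phi x' y)) (phi x y)) /\
  (forall x y y', qle (tens (phi x y) (b y y')) (phi x y')).

Definition mcomp {V : quantale} (X Y Z : Type) (psi : Y -> Z -> V)
    (phi : X -> Y -> V) : X -> Z -> V :=
  fun x z => qsup (fun w => exists y, w = tens (phi x y) (psi y z)).

Definition mod_adjoint {V : quantale} (X Y : Type) (a : X -> X -> V)
    (b : Y -> Y -> V) (phi : X -> Y -> V) (psi : Y -> X -> V) : Prop :=
  (forall x x', qle (a x x') (mcomp psi phi x x')) /\
  (forall y y', qle (mcomp phi psi y y') (b y y')).

Definition Ecat (V : quantale) : unit -> unit -> V := fun _ _ => qunit.

Definition left_adjoint_module {V : quantale} (X Y : Type) (a : X -> X -> V)
    (b : Y -> Y -> V) (phi : X -> Y -> V) : Prop :=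
  is_module a b phi /\
  exists psi : Y -> X -> V, is_module b a psi /\ mod_adjoint a b phi psi.

Definition cauchy_complete {V : quantale} (X : Type) (a : X -> X -> V) : Prop :=
  forall phi : unit -> X -> V, left_adjoint_module (@Ecat V) a phi ->
    exists x : X, forall y : X, phi tt y = a x y.

(* Main.v *)
Require Import Defs.
From Stdlib Require Import Setoid.

Lemma le_sup (Q : quantale) (S : Q -> Prop) (u v : Q) : S u -> qle v u -> qle v (qsup S).
Proof. intros Hs H. eapply qle_trans; [exact H| apply qsup_ub; exact Hs]. Qed.

Lemma tens_monor (Q : quantale) (u v v' : Q) : qle v v' -> qle (tens u v) (tens u v').
Proof.
  intros H.
  set (S := fun t : Q => t = v \/ t = v').
  assert (E : qsup S = v').
  { apply qle_antisym.
    - apply qsup_least. intros t [->| ->]; [exact H| apply qle_refl].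
    - apply qsup_ub. right; reflexivity. }
  rewrite <- E. rewrite tens_sup. apply qsup_ub. exists v. split; [left; reflexivity| reflexivity].
Qed.

Lemma tens_monol (Q : quantale) (u u' v : Q) : qle u u' -> qle (tens u v) (tens u' v).
Proof. intros H. rewrite (tens_comm _ u), (tens_comm _ u'). apply tens_monor; exact H. Qed.

Lemma tens_mono (Q : quantale) (u u' v v' : Q) : qle u u' -> qle v v' -> qle (tens u v) (tens u' v').
Proof. intros H1 H2. eapply qle_trans; [apply tens_monol; exact H1| apply tens_monor; exact H2]. Qed.

Lemma tens_sup_le (Q : quantale) (u c : Q) (S : Q -> Prop) :
  (forall s, S s -> qle (tens u s) c) -> qle (tens u (qsup S)) c.
Proof. intros H. rewrite tens_sup. apply qsup_least. intros w [v [Hv ->]]. apply H; exact Hv. Qed.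

Lemma sup_tens_le (Q : quantale) (u c : Q) (S : Q -> Prop) :
  (forall s, S s -> qle (tens s u) c) -> qle (tens (qsup S) u) c.
Proof. intros H. rewrite tens_comm. apply tens_sup_le. intros s Hs. rewrite tens_comm. apply H; exact Hs. Qed.

Lemma unit_r (Q : quantale) (u : Q) : tens u qunit = u.
Proof. rewrite tens_comm. apply tens_unit. Qed.

Lemma mor_mono {V W : quantale} (F : V -> W) : quantale_morphism F ->
  forall u v, qle u v -> qle (F u) (F v).
Proof. intros [h _]; exact h. Qed.
Lemma mor_tens {V W : quantale} (F : V -> W) : quantale_morphism F ->
  forall u v, tens (F u) (F v) = F (tens u v).
Proof. intros [_ [_ [h _]]]; exact h. Qed.
Lemma mor_unit {V W : quantale} (F : V -> W) : quantale_morphism F -> F qunit = qunit.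
Proof. intros [_ [_ [_ h]]]; exact h. Qed.
Lemma mor_sup_le {V W : quantale} (F : V -> W) : quantale_morphism F ->
  forall (S : V -> Prop) c, (forall s, S s -> qle (F s) c) -> qle (F (qsup S)) c.
Proof. intros [_ [h _]] S c H. rewrite h. apply qsup_least. intros w [v [Hv ->]]. apply H; exact Hv. Qed.

Definition phi2 {V W : quantale} (G : W -> V) {X : Type} (a : X -> X -> V)
  (phi : unit -> X -> W) (y : X) : V :=
  qsup (fun w => exists z, w = tens (G (phi tt z)) (a z y)).
Definition psi2 {V W : quantale} (G : W -> V) {X : Type} (a : X -> X -> V)
  (psi : X -> unit -> W) (y : X) : V :=
  qsup (fun w => exists z, w = tens (a y z) (G (psi z tt))).

Lemma p_le_phi2 {V W : quantale} (G : W -> V) {X : Type} (a : X -> X -> V) phi y :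
  is_Vcat a -> qle (G (phi tt y)) (phi2 G a phi y).
Proof.
  intros [hr _]. unfold phi2. eapply le_sup. exists y; reflexivity.
  rewrite <- (unit_r _ (G (phi tt y))) at 1. apply tens_monor, hr.
Qed.

Lemma q_le_psi2 {V W : quantale} (G : W -> V) {X : Type} (a : X -> X -> V) psi y :
  is_Vcat a -> qle (G (psi y tt)) (psi2 G a psi y).
Proof.
  intros [hr _]. unfold psi2. eapply le_sup. exists y; reflexivity.
  rewrite <- (tens_unit _ (G (psi y tt))) at 1. apply tens_monol, hr.
Qed.

Lemma key (V W : quantale) (F : V -> W) (G : W -> V) :
  quantale_morphism F -> quantale_morphism G ->
  (forall u, qle (G (F u)) u) ->
  forall (X : Type) (a : X -> X -> V), is_Vcat a -> cauchy_complete a ->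
  forall (phi : unit -> X -> W) (psi : X -> unit -> W),
    is_module (Ecat W) (fun x y => F (a x y)) phi ->
    is_module (fun x y => F (a x y)) (Ecat W) psi ->
    mod_adjoint (Ecat W) (fun x y => F (a x y)) phi psi ->
    exists x, (forall y, phi2 G a phi y = a x y) /\ (forall y, psi2 G a psi y = a y x).
Proof.
  intros hF hG GF X a hX hcc phi psi hm1 hm2 [hu hc].
  pose (P := fun (_ : unit) y => phi2 G a phi y).
  pose (Ps := fun y (_ : unit) => psi2 G a psi y).
  destruct hX as [hr ht].
  assert (counit : forall y y', qle (tens (Ps y tt) (P tt y')) (a y y')).
  { intros y y'. unfold Ps, P, psi2, phi2. apply sup_tens_le. intros s [z ->].
    apply tens_sup_le. intros s [z' ->].
    rewrite tens_assoc. eapply qle_trans; [|apply (ht y z' y')]. apply tens_monol.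
    rewrite <- tens_assoc. eapply qle_trans; [|apply (ht y z z')]. apply tens_monor.
    rewrite (mor_tens G hG). eapply qle_trans; [|apply (GF (a z z'))].
    apply (mor_mono G hG).
    eapply qle_trans; [|apply (hc z z')]. unfold mcomp. apply qsup_ub. exists tt. reflexivity. }
  assert (unitP : qle qunit (qsup (fun w => exists y, w = tens (P tt y) (Ps y tt)))).
  { rewrite <- (mor_unit G hG).
    eapply qle_trans. apply (mor_mono G hG). apply (hu tt tt).
    unfold mcomp. apply (mor_sup_le G hG). intros s [y ->].
    rewrite <- (mor_tens G hG).
    eapply le_sup. exists y; reflexivity.
    apply tens_mono. apply (p_le_phi2 G a phi y). split; assumption.
    apply (q_le_psi2 G a psi y). split; assumption. }
  assert (modPs : forall y y', qle (tens (a y y') (Ps y' tt)) (Ps y tt)).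
  { intros y y'. unfold Ps, psi2. apply tens_sup_le. intros s [z ->].
    eapply le_sup. exists z; reflexivity. rewrite tens_assoc. apply tens_monol, ht. }
  assert (Hla : left_adjoint_module (Ecat V) a P).
  { split; [split|].
    - intros t t' y. unfold Ecat. rewrite tens_unit. apply qle_refl.
    - intros t y y'. unfold P, phi2. apply sup_tens_le. intros s [z ->].
      eapply le_sup. exists z; reflexivity. rewrite <- tens_assoc. apply tens_monor, ht.
    - exists Ps. split; [split|split].
      + intros y y' t. destruct t. apply modPs.
      + intros y t t'. unfold Ecat. rewrite unit_r. apply qle_refl.
      + intros t t'. destruct t, t'. exact unitP.
      + intros y y'. unfold mcomp. apply qsup_least. intros w [t ->]. destruct t. apply counit. }
  destruct (hcc P Hla) as [x Hx].
  exists x. split; [intros y; exact (Hx y)|].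
  intros y. change (psi2 G a psi y) with (Ps y tt). apply qle_antisym.
  - rewrite <- (unit_r _ (Ps y tt)). eapply qle_trans. apply tens_monor. apply (hr x).
    rewrite <- (Hx x). apply counit.
  - rewrite <- (unit_r _ (a y x)). eapply qle_trans. apply tens_monor. exact unitP.
    apply tens_sup_le. intros s [w ->]. rewrite Hx.
    rewrite tens_assoc. eapply qle_trans; [|apply (modPs y w)]. apply tens_monol, ht.
Qed.

Theorem corollary3p3 (V W : quantale) (F : V -> W) (G : W -> V) :
  quantale_morphism F -> quantale_morphism G ->
  (madjoint G F \/ (madjoint F G /\ (forall u v : V, F u = F v -> u = v))) ->
  forall (X : Type) (a : X -> X -> V),
    is_Vcat a -> cauchy_complete a ->
    cauchy_complete (fun x y => F (a x y)).
Proof.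
  intros hF hG Hcase X a hX hcc phi [hm1 [psi [hm2 [hu hc]]]].
  assert (GF : forall u, qle (G (F u)) u).
  { destruct Hcase as [H | [H Hinj]].
    - intros u. apply H. apply qle_refl.
    - intros u. assert (E : G (F u) = u).
      { apply Hinj. apply qle_antisym.
        + apply H. apply qle_refl.
        + apply (mor_mono F hF). apply H. apply qle_refl. }
      rewrite E. apply qle_refl. }
  destruct (key V W F G hF hG GF X a hX hcc phi psi hm1 hm2 (conj hu hc)) as [x [Hx1 Hx2]].
  destruct hX as [hr ht].
  exists x. intros y.
  assert (Ht : forall u v w, qle (tens (F (a u v)) (F (a v w))) (F (a u w))).
  { intros u v w. rewrite (mor_tens F hF). apply (mor_mono F hF), ht. }
  assert (hu0 := hu tt tt). unfold Ecat, mcomp in hu0.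
  destruct Hcase as [H | [H Hinj]].
  - assert (FGup : forall w, qle w (F (G w))).
    { intros w. apply H. apply qle_refl. }
    assert (phle : forall y, qle (phi tt y) (F (a x y))).
    { intros z. eapply qle_trans. apply FGup. apply (mor_mono F hF).
      rewrite <- Hx1. apply (p_le_phi2 G a phi z). split; assumption. }
    assert (psle : forall y, qle (psi y tt) (F (a y x))).
    { intros z. eapply qle_trans. apply FGup. apply (mor_mono F hF).
      rewrite <- Hx2. apply (q_le_psi2 G a psi z). split; assumption. }
    apply qle_antisym. apply phle.
    rewrite <- (tens_unit _ (F (a x y))). eapply qle_trans. apply tens_monol. exact hu0.
    apply sup_tens_le. intros s [w ->]. rewrite <- tens_assoc.
    eapply qle_trans; [| apply (proj2 hm1 tt w y)]. apply tens_monor.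
    eapply qle_trans; [apply tens_monol, psle| apply Ht].
  - assert (FGdown : forall w, qle (F (G w)) w).
    { intros w. apply H. apply qle_refl. }
    assert (phge : forall y, qle (F (a x y)) (phi tt y)).
    { intros z. rewrite <- Hx1. unfold phi2. apply (mor_sup_le F hF). intros s [w ->].
      rewrite <- (mor_tens F hF). eapply qle_trans; [apply tens_monol, FGdown|].
      apply (proj2 hm1 tt w z). }
    assert (psge : forall y, qle (F (a y x)) (psi y tt)).
    { intros z. rewrite <- Hx2. unfold psi2. apply (mor_sup_le F hF). intros s [w ->].
      rewrite <- (mor_tens F hF). eapply qle_trans; [apply tens_monor, FGdown|].
      apply (proj1 hm2 z w tt). }
    apply qle_antisym; [|apply phge].
    rewrite <- (tens_unit _ (phi tt y)). eapply qle_trans. apply tens_monol.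
    instantiate (1 := tens (F (a x x)) (F (a x x))).
    rewrite <- (tens_unit _ qunit). rewrite <- (mor_unit F hF). apply tens_mono; apply (mor_mono F hF), hr.
    rewrite <- tens_assoc. eapply qle_trans; [|apply (Ht x x y)]. apply tens_monor.
    eapply qle_trans. apply tens_monol, psge.
    eapply qle_trans; [|apply (hc x y)]. unfold mcomp. apply qsup_ub. exists tt. reflexivity.
Qed.
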